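(* Let $P\in\mathbb{R}_+^{n\times n}$ be sub-stochastic, $w\in\mathbb{R}^n_+$, $c\in\mathbb{R}^n$, and let $\mathcal X=\{x\in\mathbb{R}^n:\,x=S_0^w(P'x+c)\}$. Then there exists a partition $\mathcal V=\{1,\dots,n\}=\mathcal V_+\cup\mathcal V_0\cup\mathcal V_-$ such that (i) every equilibrium $x\in\mathcal X$ satisfies $x_{\mathcal V_-}=0$, $x_{\mathcal V_+}=w_{\mathcal V_+}$, and $x_i=c_i+\sum_{j}P_{ji}x_j$ for every $i\in\mathcal V_0$; (ii) for any two equilibria $x^{(1)},x^{(2)}\in\mathcal X$, $x^{(1)}_{\mathcal V_-}=x^{(2)}_{\mathcal V_-}$ and $x^{(1)}_{\mathcal V_+}=x^{(2)}_{\mathcal V_+}$.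
   Context: $P$ sub-stochastic: nonnegative with $P\mathbbm{1}\le\mathbbm{1}$. $(S_0^w(x))_i=\min\{\max\{x_i,0\},w_i\}$; $P'$ is the transpose. For a vector $v$ and $\mathcal A\subseteq\{1,\dots,n\}$, $v_{\mathcal A}$ is the subvector indexed by $\mathcal A$. *)

(* Defs.v *)
From HB Require Import structures.
From mathcomp Require Import all_boot all_order all_algebra.
From mathcomp Require Import reals.
Set Implicit Arguments. Unset Strict Implicit. Unset Printing Implicit Defensive.
Import Order.TTheory GRing.Theory Num.Theory.
Local Open Scope ring_scope.

Definition substochastic (R : realType) (n : nat) (P : 'M[R]_n) : Prop :=
  (forall i j, 0 <= P i j) /\ (forall i, \sum_(j < n) P i j <= 1).

Definition S0 (R : realType) (n : nat) (w y : 'cV[R]_n) : 'cV[R]_n :=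
  \col_i Num.min (Num.max (y i 0) 0) (w i 0).

Definition equilibrium (R : realType) (n : nat) (P : 'M[R]_n) (w c x : 'cV[R]_n)
  : Prop := x = S0 w (P^T *m x + c).

(* Main.v *)
Require Import Defs.
From HB Require Import structures.
From mathcomp Require Import all_boot all_order all_algebra.
From mathcomp Require Import reals.
From mathcomp Require Import boolp lra.
Import Order.TTheory GRing.Theory Num.Theory.
Local Open Scope ring_scope.

Section ClipSec.
Variable R : realType.
Definition clip (w a : R) := Num.min (Num.max a 0) w.

Lemma clip_cases (w a : R) : 0 <= w ->
  (a <= 0 /\ clip w a = 0) \/ (0 <= a <= w /\ clip w a = a) \/ (w <= a /\ clip w a = w).
Proof.
move=> w0; rewrite /clip.
have [ha|ha] := boolP (a <= 0).
  by left; rewrite max_r // min_l.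
rewrite -ltNge in ha.
have [hw|hw] := boolP (a <= w).
  by right; left; rewrite max_l ?ltW // min_l // (ltW ha) hw.
rewrite -ltNge in hw.
by right; right; rewrite max_l ?ltW // min_r ?ltW // (ltW hw).
Qed.

Lemma normr_cases (u : R) : (0 <= u /\ `|u| = u) \/ (u <= 0 /\ `|u| = - u).
Proof.
have [h|h] := lerP 0 u; first by left; rewrite ger0_norm.
by right; rewrite ltr0_norm // ltW.
Qed.

Lemma clip_lip (w a b : R) : 0 <= w -> `|clip w a - clip w b| <= `|a - b|.
Proof.
move=> w0; rewrite ler_norml; apply/andP; split;
have [[h1 ->]|[[/andP[h1 h1'] ->]|[h1 ->]]] := clip_cases w a w0;
have [[h2 ->]|[[/andP[h2 h2'] ->]|[h2 ->]]] := clip_cases w b w0;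
have [[h3 ->]|[h3 ->]] := normr_cases (a - b); lra.
Qed.

Lemma clip_eq (w a b : R) : 0 <= w ->
  `|clip w a - clip w b| = `|a - b| -> clip w a != a -> a = b.
Proof.
move=> w0.
have [[h3 ->]|[h3 ->]] := normr_cases (clip w a - clip w b);
have [[h4 ->]|[h4 ->]] := normr_cases (a - b);
move: h3;
have [[h1 ->]|[[/andP[h1 h1'] ->]|[h1 ->]]] := clip_cases w a w0;
have [[h2 ->]|[[/andP[h2 h2'] ->]|[h2 ->]]] := clip_cases w b w0;
move=> h3 E N;
first [ by rewrite eqxx in N
      | have ha : a < 0 by rewrite lt_neqAle eq_sym N h1
      | have ha : w < a by rewrite lt_neqAle N h1 ]; lra.
Qed.
End ClipSec.
Arguments clip {R}.
Arguments clip_eq {R w a b}.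
Arguments clip_cases {R}.


Lemma part3 (T : finType) (A B : {set T}) :
  [/\ [disjoint A :\: B & ~: ((A :\: B) :|: B)], [disjoint A :\: B & B],
      [disjoint ~: ((A :\: B) :|: B) & B]
    & (A :\: B) :|: ~: ((A :\: B) :|: B) :|: B = [set: T]].
Proof.
split; try (rewrite -setI_eq0; apply/eqP/setP => i; rewrite !inE;
  by case: (i \in A); case: (i \in B)).
by apply/setP => i; rewrite !inE; case: (i \in A); case: (i \in B).
Qed.

Definition yv (R : realType) (n : nat) (P : 'M[R]_n) (c x : 'cV[R]_n) (i : 'I_n) :=
  \sum_(j < n) P j i * x j 0 + c i 0.

Arguments yv {R n}.

Lemma eqE (R : realType) (n : nat) (P : 'M[R]_n) (w c x : 'cV[R]_n) :
  equilibrium P w c x -> forall i, x i 0 = clip (w i 0) (yv P c x i).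
Proof.
move=> E i; rewrite {1}E /S0 mxE /clip /yv !mxE.
congr (Num.min (Num.max (_ + _) 0) _).
by apply: eq_bigr => j _; rewrite mxE.
Qed.

Arguments eqE {R n P w c x}.

Lemma key (R : realType) (n : nat) (P : 'M[R]_n) (w c x x' : 'cV[R]_n) :
  substochastic P -> (forall i, 0 <= w i 0) ->
  equilibrium P w c x -> equilibrium P w c x' ->
  forall i, x i 0 != yv P c x i -> x' i 0 = x i 0.
Proof.
move=> [P0 P1] w0 Ex Ex' i N.
pose d (j : 'I_n) : R := `|x j 0 - x' j 0|.
pose e (j : 'I_n) : R := `|yv P c x j - yv P c x' j|.
have hde : forall j, d j <= e j.
  by move=> j; rewrite /d (eqE Ex) (eqE Ex'); apply: clip_lip.
have he : forall j, e j <= \sum_(k < n) P k j * d k.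
  move=> j; rewrite /e /yv opprD addrACA subrr addr0 -sumrB.
  apply: le_trans (ler_norm_sum _ _ _) _.
  by apply: ler_sum => k _; rewrite -mulrBr normrM ger0_norm.
have hsum : \sum_j e j <= \sum_j d j.
  apply: le_trans (ler_sum _ (fun j _ => he j)) _.
  rewrite exchange_big /=; apply: ler_sum => k _.
  by rewrite -mulr_suml; apply: ler_piMl; [exact: normr_ge0 | exact: P1].
have hz : \sum_j (e j - d j) = 0.
  apply/eqP; rewrite eq_le sumrB subr_le0 hsum /=.
  by rewrite subr_ge0; apply: ler_sum => j _; exact: hde.
have hij : forall j, e j - d j = 0.
  by move=> j; apply: (psumr_eq0P (P := fun _ => true) _ hz) => // k _; rewrite subr_ge0.
have : d i = e i.
  by apply/eqP; rewrite eq_sym -subr_eq0; apply/eqP; apply: hij.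
move=> E; rewrite /d /e /= in E; rewrite [x i 0](eqE Ex) [x' i 0](eqE Ex') in E.
rewrite (eqE Ex) in N.
by rewrite (eqE Ex') (eqE Ex) (clip_eq (w0 i) E N).
Qed.

Arguments key {R n P w c x x'}.

Theorem corollary1 (R : realType) (n : nat) (P : 'M[R]_n) (w c : 'cV[R]_n) :
  substochastic P -> (forall i, 0 <= w i 0) ->
  exists Vp V0 Vm : {set 'I_n},
    [/\ [disjoint Vp & V0], [disjoint Vp & Vm], [disjoint V0 & Vm]
      & Vp :|: V0 :|: Vm = [set: 'I_n]] /\
    (forall x : 'cV[R]_n, equilibrium P w c x ->
       [/\ forall i, i \in Vm -> x i 0 = 0,
           forall i, i \in Vp -> x i 0 = w i 0
         & forall i, i \in V0 -> x i 0 = c i 0 + \sum_(j < n) P j i * x j 0]) /\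
    (forall x1 x2 : 'cV[R]_n, equilibrium P w c x1 -> equilibrium P w c x2 ->
       (forall i, i \in Vm -> x1 i 0 = x2 i 0) /\
       (forall i, i \in Vp -> x1 i 0 = x2 i 0)).
Proof.
move=> HP w0.
pose A := [set i | `[< exists x, equilibrium P w c x /\ x i 0 != yv P c x i >]].
pose B := [set i | `[< exists x, equilibrium P w c x /\ x i 0 = 0 /\ x i 0 != yv P c x i >]].
have part1 : forall x : 'cV[R]_n, equilibrium P w c x ->
       [/\ forall i, i \in B -> x i 0 = 0,
           forall i, i \in A :\: B -> x i 0 = w i 0
         & forall i, i \in ~: ((A :\: B) :|: B) -> x i 0 = c i 0 + \sum_(j < n) P j i * x j 0].
  move=> x Ex; split.
  - move=> i; rewrite inE => /asboolP [xs [Exs [xs0 N]]].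
    by rewrite (key HP w0 Exs Ex i N).
  - move=> i; rewrite inE => /andP [nB]; rewrite inE => /asboolP [xs [Exs N]].
    rewrite (key HP w0 Exs Ex i N).
    have [[h1 e1]|[[/andP[h1 h1'] e1]|[h1 e1]]] := clip_cases (w i 0) (yv P c xs i) (w0 i).
    - exfalso; move/negP: nB; apply; rewrite ?inE; apply/asboolP.
      by exists xs; rewrite (eqE Exs) e1; split => //; rewrite -e1 -(eqE Exs).
    - by move: N; rewrite (eqE Exs) e1 eqxx.
    - by rewrite (eqE Exs) e1.
  - move=> i; rewrite in_setC in_setU in_setD negb_or negb_and negbK => /andP [H1 H2].
    have : x i 0 == yv P c x i.
      apply: contraT => N.
      have [/eqP x0|x0] := boolP (x i 0 == 0).
        by exfalso; apply: (negP H2); rewrite inE; apply/asboolP; exists x.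
      have hA : i \in A by rewrite inE; apply/asboolP; exists x.
      by move: H1; rewrite (negbTE H2) /= hA.
    by move/eqP => ->; rewrite /yv addrC.
exists (A :\: B), (~: ((A :\: B) :|: B)), B; split; first exact: part3.
split; first exact: part1.
move=> x1 x2 E1 E2; have [a1 b1 _] := part1 _ E1; have [a2 b2 _] := part1 _ E2.
by split=> i hi; [rewrite a1 // a2 | rewrite b1 // b2].
Qed.
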